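(* Let $N=\{1,\ldots,n\}$ and $v\in\mathscr{G}_+(n)$. Then $v$ is a vertex of $\mathscr{BG}_+(n)$ if and only if $v$ is balanced and $0$-$1$-valued (i.e., $v(S)\in\{0,1\}$ for all $S\subseteq N$).
   Context: A game on $N$ is a map $v:2^N\to\mathbb{R}$ with $v(\varnothing)=0$. $\mathscr{G}_+(n)$ is the set of games with $v\geqslant 0$ and $v(N)=1$. The core of $v$ is $C(v)=\{x\in\mathbb{R}^N: \sum_{i\in S}x_i\geqslant v(S)\ \forall S\subseteq N,\ \sum_{i\in N}x_i=v(N)\}$; $v$ is balanced iff $C(v)\neq\varnothing$ (equivalently, $\sum_{S\in\mathscr{B}}\lambda^{\mathscr{B}}_Sv(S)\leqslant v(N)$ for every minimal balanced collection $\mathscr{B}\neq\{N\}$ with its balancing weights $\lambda^{\mathscr{B}}_S$). $\mathscr{BG}_+(n)$ is the set of balanced games in $\mathscr{G}_+(n)$, a polytope in $\mathbb{R}^{2^N\setminus\{\varnothing,N\}}$. *)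

(* Defs.v *)
(* Player set N = 'I_n (i.e. {0,...,n-1}, relabelling of {1,...,n}). *)
From mathcomp Require Import all_boot all_order all_algebra.
From mathcomp Require Import reals.
Set Implicit Arguments. Unset Strict Implicit. Unset Printing Implicit Defensive.
Import Order.TTheory GRing.Theory Num.Theory.
Local Open Scope ring_scope.

(* A game on N: a map v : 2^N -> R (with v(set0) = 0 imposed where needed). *)
Definition game (n : nat) (R : realType) := {set 'I_n} -> R.

Definition in_Gplus (n : nat) (R : realType) (v : game n R) : Prop :=
  v set0 = 0 /\ (forall S : {set 'I_n}, 0 <= v S) /\ v [set: 'I_n] = 1.

Definition core (n : nat) (R : realType) (v : game n R) : ('I_n -> R) -> Prop :=
  fun x => (forall S : {set 'I_n}, v S <= \sum_(i in S) x i) /\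
           \sum_(i < n) x i = v [set: 'I_n].

Definition balanced (n : nat) (R : realType) (v : game n R) : Prop :=
  exists x : 'I_n -> R, core v x.

Definition in_BGplus (n : nat) (R : realType) (v : game n R) : Prop :=
  in_Gplus v /\ balanced v.

Definition is_vertex_BGplus (n : nat) (R : realType) (v : game n R) : Prop :=
  in_BGplus v /\
  forall (w1 w2 : game n R) (t : R),
    in_BGplus w1 -> in_BGplus w2 -> 0 < t -> t < 1 ->
    (forall S, v S = t * w1 S + (1 - t) * w2 S) ->
    forall S, w1 S = w2 S.

Definition zero_one_valued (n : nat) (R : realType) (v : game n R) : Prop :=
  forall S : {set 'I_n}, v S = 0 \/ v S = 1.

(* Main.v *)
Require Import Defs.
From mathcomp Require Import all_boot all_order all_algebra.
From mathcomp Require Import reals.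
From mathcomp Require Import lra ring.
Import Order.TTheory GRing.Theory Num.Theory.
Local Open Scope ring_scope.

Section Aux.
Local Set Implicit Arguments.
Variables (R : realType) (n : nat).

Lemma sumT (x : 'I_n -> R) : \sum_(i < n) x i = \sum_(i in [set: 'I_n]) x i.
Proof. by apply: eq_bigl => i; rewrite in_setT. Qed.

Lemma core_nonneg (w : game n R) x : (forall S, 0 <= w S) -> core w x ->
  forall k, 0 <= x k.
Proof.
move=> h [c _] k; apply: le_trans (h [set k]) _.
by have := c [set k]; rewrite big_set1.
Qed.

Lemma core_le1 (w : game n R) x : (forall S, 0 <= w S) -> w [set: 'I_n] = 1 ->
  core w x -> forall T : {set 'I_n}, \sum_(k in T) x k <= 1.
Proof.
move=> h h1 c T; have x0 := core_nonneg h c.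
case: c => _ s; rewrite h1 in s; rewrite -s [X in _ <= X](bigID (fun k => k \in T)) /=.
rewrite lerDl; apply: sumr_ge0 => k _; exact: x0.
Qed.

Lemma bg_le1 (w : game n R) : in_BGplus w -> forall T, w T <= 1.
Proof.
move=> [[_ [h h1]] [x c]] T; apply: le_trans (core_le1 h h1 c T).
by case: c => c _; exact: c.
Qed.

Lemma sum_ind (i : 'I_n) (T : {set 'I_n}) :
  \sum_(k in T) ((k == i)%:R : R) = (i \in T)%:R.
Proof.
case: (boolP (i \in T)) => H.
  rewrite (bigD1 i) //= eqxx big1 ?addr0 // => k /andP[_ /negbTE ->] //.
rewrite big1 // => k kT; case: eqP => // e; by rewrite -e kT in H.
Qed.

Lemma sum_pert (x : 'I_n -> R) (c : R) (i j : 'I_n) (T : {set 'I_n}) :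
  \sum_(k in T) (x k + c * ((k == i)%:R - (k == j)%:R)) =
  \sum_(k in T) x k + c * ((i \in T)%:R - (j \in T)%:R).
Proof. by rewrite big_split /= -mulr_sumr sumrB !sum_ind. Qed.

Lemma scaled_bg (v : game n R) x (y : 'I_n -> R) :
  in_Gplus v -> core v x -> (forall k, 0 <= y k) -> \sum_(i < n) y i = 1 ->
  in_BGplus (fun T => v T / (\sum_(k in T) x k) * (\sum_(k in T) y k)).
Proof.
move=> [h0 [h h1]] c y0 ys.
have x0 := core_nonneg h c.
have xs : \sum_(k in [set: 'I_n]) x k = 1 by case: c => _; rewrite sumT h1.
have ys' : \sum_(k in [set: 'I_n]) y k = 1 by rewrite -sumT.
have le1 : forall T, v T / (\sum_(k in T) x k) <= 1.
  move=> T; have [e|ne] := eqVneq (\sum_(k in T) x k) 0.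
    by rewrite e invr0 mulr0.
  have p : 0 < \sum_(k in T) x k.
    by rewrite lt_neqAle eq_sym ne; apply: sumr_ge0 => k _.
  by rewrite ler_pdivrMr // mul1r; case: c => c _; exact: c.
split; [split; [|split]|].
- by rewrite h0 !mul0r.
- move=> S; apply: mulr_ge0; last by apply: sumr_ge0.
  by apply: divr_ge0 => //; apply: sumr_ge0.
- by rewrite xs ys' h1 invr1 !mulr1.
- exists y; split; last by rewrite ys ys' xs h1 invr1 !mulr1.
  move=> T; apply: ler_piMl => //; apply: sumr_ge0 => k _; exact: y0.
Qed.

Lemma avg_aux (a s e d : R) :
  a * s = 1 / 2 * (a * (s + e * d)) + (1 - 1 / 2) * (a * (s + - e * d)).
Proof. rewrite !mulrDr mulNr mulrN; lra. Qed.

End Aux.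

Theorem theorem8 (R : realType) (n : nat) (v : game n R) :
  in_Gplus v ->
  (is_vertex_BGplus v <-> (balanced v /\ zero_one_valued v)).
Proof.
move=> hG; split; last first.
  move=> [bal zo]; split; first by split.
  move=> w1 w2 t b1 b2 t0 t1 hc S.
  have g1 : 0 <= w1 S by case: b1 => [[_ [h _]] _].
  have g2 : 0 <= w2 S by case: b2 => [[_ [h _]] _].
  have l1 := bg_le1 b1 S; have l2 := bg_le1 b2 S.
  have := hc S; case: (zo S) => -> e.
    have : t * w1 S = 0 by nra.
    have : (1 - t) * w2 S = 0 by nra.
    move/eqP; rewrite mulf_eq0 => /orP[/eqP|/eqP ->]; first lra.
    move/eqP; rewrite mulf_eq0 => /orP[/eqP|/eqP ->]; [lra|done].
  have : t * (1 - w1 S) = 0 by nra.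
  have : (1 - t) * (1 - w2 S) = 0 by nra.
  move/eqP; rewrite mulf_eq0 => /orP[/eqP|/eqP e2]; first lra.
  move/eqP; rewrite mulf_eq0 => /orP[/eqP|/eqP e1]; [lra|lra].
move=> [[hG' bal] hv]; split => // S.
have [->|n0] := eqVneq (v S) 0; first by left.
have [->|n1] := eqVneq (v S) 1; first by right.
exfalso.
case: hG => [h0 [h h1]].
have vp : 0 < v S by rewrite lt_neqAle eq_sym n0 h.
have vl : v S < 1 by rewrite lt_neqAle n1 (bg_le1 (conj hG' bal)).
case: bal => x c.
have x0 := core_nonneg h c.
have xl := core_le1 h h1 c.
have vx : v S <= \sum_(k in S) x k by case: c => c _; exact: c.
have SN0 : (set0 == S) = false by apply/eqP => e; rewrite -e h0 in vp; rewrite ltxx in vp.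
have SNT : ([set: 'I_n] == S) = false.
  by apply/eqP => e; rewrite -e h1 in vl; rewrite ltxx in vl.
have [lt|ge] := ltP (v S) (\sum_(k in S) x k).
  set s := \sum_(k in S) x k in lt vx.
  have sl : s <= 1 by exact: xl.
  pose e := v S * (s - v S).
  have ep : 0 < e by apply: mulr_gt0 => //; rewrite subr_gt0.
  have e1 : e <= v S by rewrite /e; nra.
  have e2 : v S + e <= s by rewrite /e; nra.
  pose w1 := fun T => if T == S then v S + e else v T.
  pose w2 := fun T => if T == S then v S - e else v T.
  have b1 : in_BGplus w1.
    split; [split; [|split]|].
    - by rewrite /w1 SN0.
    - by move=> T; rewrite /w1; case: ifP => _ //; lra.
    - by rewrite /w1 SNT.
    - exists x; split.
        move=> T; rewrite /w1; case: ifP => [/eqP -> |_]; last by case: c => c _; exact: c.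
        rewrite -/s; lra.
      by rewrite /w1 SNT; case: c.
  have b2 : in_BGplus w2.
    split; [split; [|split]|].
    - by rewrite /w2 SN0.
    - by move=> T; rewrite /w2; case: ifP => _ //; lra.
    - by rewrite /w2 SNT.
    - exists x; split.
        move=> T; rewrite /w2; case: ifP => [/eqP -> |_]; last by case: c => c _; exact: c.
        rewrite -/s; lra.
      by rewrite /w2 SNT; case: c.
  have := hv w1 w2 (1/2) b1 b2.
  have -> : (0 : R) < 1 / 2 by rewrite divr_gt0.
  have -> : (1 / 2 : R) < 1 by lra.
  move=> /(_ isT isT) H.
  have hc : forall T, v T = 1 / 2 * w1 T + (1 - 1 / 2) * w2 T.
    by move=> T; rewrite /w1 /w2; case: eqP => [->|_]; lra.
  have := H hc S; rewrite /w1 /w2 eqxx; lra.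
have vS : v S = \sum_(k in S) x k by apply/eqP; rewrite eq_le vx ge.
set s := \sum_(k in S) x k in vS vx ge.
case: (pickP [pred k | (k \in S) && (0 < x k)]) => [i /andP[iS xi] | H]; last first.
  have : s <= 0.
    rewrite /s; apply: sumr_le0 => k kS; have := H k; rewrite /= kS /= => /negbT.
    by rewrite -leNgt.
  lra.
case: (pickP [pred k | (k \notin S) && (0 < x k)]) => [j /andP[jS xj] | H]; last first.
  have : \sum_(k in [set: 'I_n]) x k <= s.
    rewrite -sumT [X in X <= _](bigID (fun k => k \in S)) /= gerDl.
    apply: sumr_le0 => k kS; have := H k; rewrite /= kS /= => /negbT.
    by rewrite -leNgt.
  case: c => _; rewrite sumT h1; lra.
have ij : (i == j) = false by apply/eqP => e; move: jS; rewrite -e iS.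
have xi1 : x i <= 1 by have := xl [set i]; rewrite big_set1.
have xj1 : x j <= 1 by have := xl [set j]; rewrite big_set1.
pose e := x i * x j.
have ep : 0 < e by apply: mulr_gt0.
have ei : e <= x i by rewrite /e; nra.
have ej : e <= x j by rewrite /e; nra.
pose y := fun k => x k + e * ((k == i)%:R - (k == j)%:R).
pose z := fun k => x k + (- e) * ((k == i)%:R - (k == j)%:R).
have y0 : forall k, 0 <= y k.
  move=> k; rewrite /y; have [->|ki] := eqVneq k i; first by rewrite ?eqxx ?ij /= ?mulr0n ?mulr1n; have := x0 i; lra.
  have [->|kj] := eqVneq k j; first by rewrite ?eqxx ?(eq_sym j i) ?ij /= ?mulr0n ?mulr1n; lra.
  by rewrite /= subrr mulr0 addr0.
have z0 : forall k, 0 <= z k.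
  move=> k; rewrite /z; have [->|ki] := eqVneq k i; first by rewrite ?eqxx ?ij /= ?mulr0n ?mulr1n; lra.
  have [->|kj] := eqVneq k j; first by rewrite ?eqxx ?(eq_sym j i) ?ij /= ?mulr0n ?mulr1n; have := x0 j; lra.
  by rewrite /= subrr mulr0 addr0.
have xs : \sum_(k in [set: 'I_n]) x k = 1 by case: c => _; rewrite sumT h1.
have ys : \sum_(i < n) y i = 1 by rewrite sumT sum_pert xs !in_setT subrr mulr0 addr0.
have zs : \sum_(i < n) z i = 1 by rewrite sumT sum_pert xs !in_setT subrr mulr0 addr0.
have b1 := @scaled_bg R n v x y (conj h0 (conj h h1)) c y0 ys.
have b2 := @scaled_bg R n v x z (conj h0 (conj h h1)) c z0 zs.
have := hv _ _ (1/2) b1 b2.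
have -> : (0 : R) < 1 / 2 by rewrite divr_gt0.
have -> : (1 / 2 : R) < 1 by lra.
move=> /(_ isT isT) H.
have hc : forall T, v T = 1 / 2 * (v T / (\sum_(k in T) x k) * \sum_(k in T) y k) +
    (1 - 1 / 2) * (v T / (\sum_(k in T) x k) * \sum_(k in T) z k).
  move=> T; set sx := \sum_(k in T) x k.
  have K : v T / sx * sx = v T.
    have [e0|ne] := eqVneq sx 0; last by rewrite divfK.
    have : v T <= sx by case: c => c _; exact: c.
    have := h T; rewrite e0 => a b; have -> : v T = 0 by lra.
    by rewrite mulr0.
  rewrite /y /z !sum_pert -/sx -{1}K; set a := v T / sx.
  by apply: avg_aux.
have := H hc S; rewrite /y /z !sum_pert iS (negbTE jS) -/s -vS divff //=.
rewrite !mul1r subr0 !mulr1; lra.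
Qed.
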